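(* Let $K\subset\mathbb R^d$ be compact and let $\Delta$ be a family of Borel probability measures supported in $K$ having uniform densities. Suppose $t\in\mathbb R$ is such that for every $x\in K$ there is $\mu_x\in\Delta$ with $$\liminf_{r\to0}\frac{\log\mu_x(B(x,r))}{\log r}\le t.$$ Then $\dim_{\mathrm H}K\le t$.
   Context: Definition: for a compact set $K\subset\mathbb R^d$, a set $\Delta$ of Borel probability measures each supported in $K$ has uniform densities if for every $\epsilon>0$ there exist a set $\mathcal E$ of Borel measures on $\mathbb R^d$ with $\sum_{\nu\in\mathcal E}\nu(\mathbb R^d)<\infty$ and a constant $\eta>0$ such that for all $\mu\in\Delta$, $r\in(0,\eta)$ and $x\in K$ there is $\nu\in\mathcal E$ with $\frac{\log\nu(B(x,r))}{\log r}\le\frac{\log\mu(B(x,r))}{\log r}+\epsilon$ (equivalently $r^\epsilon\mu(B(x,r))\le\nu(B(x,r))$). *)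

(* Defs.v *)
From HB Require Import structures.
From mathcomp Require Import all_boot all_order all_algebra.
From mathcomp Require Import all_classical all_reals all_analysis.
Set Implicit Arguments. Unset Strict Implicit. Unset Printing Implicit Defensive.
Import Order.TTheory GRing.Theory Num.Theory.
Import numFieldNormedType.Exports.
Local Open Scope classical_set_scope.
Local Open Scope ring_scope.

Section Defs.
Variables (R : realType) (d : nat).

Definition enorm (v : 'rV[R]_d) : R := Num.sqrt (\sum_(i < d) v ord0 i ^+ 2).

Definition eball (x : 'rV[R]_d) (r : R) : set 'rV[R]_d :=
  [set y | enorm (y - x) < r].

Definition ediam (U : set 'rV[R]_d) : \bar R :=
  ereal_sup [set (enorm (x - y))%:E | x in U & y in U].

Definition borelRd : measurableType (@open 'rV[R]_d).-sigma :=
  g_sigma_algebraType (@open 'rV[R]_d).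

Definition hterm (s : R) (U : set 'rV[R]_d) : \bar R :=
  if pselect (U = set0) then 0%E else ((fine (ediam U)) `^ s)%:E.

Definition hausdorff_delta (s delta : R) (A : set 'rV[R]_d) : \bar R :=
  ereal_inf [set (\sum_(0 <= n <oo) hterm s (U n))%E |
    U in [set U : nat -> set 'rV[R]_d |
            A `<=` \bigcup_n U n /\ (forall n, (ediam (U n) <= delta%:E)%E)]].

(* s-dimensional Hausdorff measure: H^s = lim_{delta -> 0} H^s_delta
   = sup_{delta > 0} H^s_delta (monotone in delta) *)
Definition hausdorff_measure (s : R) (A : set 'rV[R]_d) : \bar R :=
  ereal_sup [set hausdorff_delta s delta A | delta in [set delta : R | 0 < delta]].

Definition hausdorff_dim (A : set 'rV[R]_d) : \bar R :=
  ereal_inf [set s%:E | s in [set s : R | 0 <= s /\ hausdorff_measure s A = 0%E]].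

Definition elog (x : \bar R) : \bar R :=
  match x with
  | r%:E => if r == 0 then -oo%E else (ln r)%:E
  | +oo%E => +oo%E
  | -oo%E => -oo%E
  end.

Definition local_ratio (mu : set borelRd -> \bar R) (x : 'rV[R]_d) (r : R)
  : \bar R := (elog (mu (eball x r)) * ((ln r)^-1)%:E)%E.

Definition lower_local_dim (mu : set borelRd -> \bar R) (x : 'rV[R]_d)
  : \bar R := limf_einf (local_ratio mu x) (0%R : R)^'+.

Definition supported_in (mu : set borelRd -> \bar R) (K : set 'rV[R]_d) :=
  mu (~` K) = 0%E.

(* uniform densities, in the form r^eps mu(B(x,r)) <= nu(B(x,r));
   the set E of measures is given as a family indexed by a choiceType I
   (E = range of the family), with \sum_{nu in E} nu(R^d) < oo *)
Definition uniform_densities (K : set 'rV[R]_d)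
    (Delta : set (probability borelRd R)) :=
  forall eps : R, 0 < eps ->
  exists (I : choiceType) (E : I -> {measure set borelRd -> \bar R}),
    (\esum_(i in [set: I]) E i [set: borelRd] < +oo)%E /\
    exists2 eta : R, 0 < eta &
      forall mu, Delta mu -> forall r : R, 0 < r < eta ->
      forall x, K x -> exists i : I,
        ((r `^ eps)%:E * mu (eball x r) <= E i (eball x r))%E.

End Defs.

(* Main.v *)
Require Import Defs.
From HB Require Import structures.
From mathcomp Require Import all_boot all_order all_algebra.
From mathcomp Require Import all_classical all_reals all_analysis.
From mathcomp Require Import ring lra zify.
Import Order.TTheory GRing.Theory Num.Theory.
Import numFieldNormedType.Exports.
Local Open Scope classical_set_scope.
Local Open Scope ring_scope.
Section Geo.
Variables (R : realType) (d : nat).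
Local Notation V := 'rV[R]_d.

Lemma coord_le_norm (v : V) i : `|v ord0 i| <= `|v|.
Proof.
have -> : `|v| = mx_norm v by []. rewrite mx_normrE.
exact: (le_bigmax _ (fun ij : 'I_1 * 'I_d => `|v ij.1 ij.2|) (ord0, i)).
Qed.

Lemma enorm_ge0 (v : V) : 0 <= enorm v.
Proof. exact: sqrtr_ge0. Qed.

Lemma coord_le_enorm (v : V) i : `|v ord0 i| <= enorm v.
Proof.
rewrite /enorm -(sqrtr_sqr (v ord0 i)) ler_sqrt; last first.
  by apply: sumr_ge0 => j _; rewrite sqr_ge0.
rewrite (bigD1 i) //= lerDl; apply: sumr_ge0 => j _; exact: sqr_ge0.
Qed.

Lemma norm_le_enorm (v : V) : `|v| <= enorm v.
Proof.
have -> : `|v| = mx_norm v by []. rewrite mx_normrE.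
apply: bigmax_le; first exact: enorm_ge0.
move=> [a j] _ /=; rewrite (ord1 a); exact: coord_le_enorm.
Qed.

Lemma enorm_le_norm (v : V) : enorm v <= Num.sqrt d%:R * `|v|.
Proof.
rewrite -(ger0_norm (normr_ge0 v)) -sqrtr_sqr -sqrtrM ?ler0n // ler_sqrt; last first.
  by rewrite mulr_ge0 ?ler0n ?sqr_ge0.
have -> : d%:R * `|v| ^+ 2 = \sum_(i < d) `|v| ^+ 2 :> R.
  by rewrite sumr_const card_ord mulr_natl.
apply: ler_sum => i _; rewrite -real_normK ?num_real //.
by rewrite lerXn2r ?nnegrE ?normr_ge0 // coord_le_norm.
Qed.

Lemma enorm0 : enorm (0 : V) = 0.
Proof. by rewrite /enorm big1 ?sqrtr0 // => i _; rewrite mxE expr0n. Qed.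

Lemma enorm_continuous : continuous (@enorm R d).
Proof.
have H : forall s : seq 'I_d, continuous (fun v : V => \sum_(i <- s) v ord0 i ^+ 2).
  elim=> [|i s IH] v.
    under eq_fun do rewrite big_nil; exact: cst_continuous.
  under eq_fun do rewrite big_cons.
  have h1 : {for v, continuous (fun v : V => v ord0 i ^+ 2)}.
    have -> : (fun v : V => v ord0 i ^+ 2) = (fun v => v ord0 i) \* (fun v => v ord0 i).
      by apply: funext => w; rewrite /= expr2.
    by apply: continuousM; apply: coord_continuous.
  exact: (@continuousD R R^o V _ _ v h1 (IH v)).
move=> w.
exact: (@continuous_comp _ _ _ (fun v : V => \sum_(i < d) v ord0 i ^+ 2) (@Num.sqrt R) w (H _ w) (@sqrt_continuous R _)).
Qed.

Lemma eball_open (x : V) r : open (eball x r).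
Proof.
rewrite (_ : eball x r = (fun y => enorm (y - x)) @^-1` `]-oo, r[).
  apply: open_comp; last exact: interval_open.
  move=> y _; apply: continuous_comp; last exact: (@enorm_continuous).
  by apply: continuousB => //; exact: cst_continuous.
by apply/seteqP; split => y /=; rewrite in_itv.
Qed.

Lemma eball_sub_ball (x : V) r : eball x r `<=` ball x r.
Proof.
move=> y /=; rewrite /eball /= -ball_normE /= distrC => h.
exact: le_lt_trans (norm_le_enorm _) h.
Qed.

End Geo.
Section Vit.
Variables (R : realType) (d : nat).
Local Notation V := 'rV[R]_d.
Variable rad : V -> R.
Hypothesis rad_gt0 : forall x, 0 < rad x.

Fixpoint sep (D : seq V) : Prop :=
  match D with
  | [::] => True
  | y :: D' => (forall z, z \in D' -> ball y (rad y) `&` ball z (rad z) = set0) /\ sep D'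
  end.

Lemma ball3 x y z : ball x (rad x) `&` ball y (rad y) !=set0 -> rad x <= rad y ->
  ball x (rad x) z -> ball y (3 * rad y) z.
Proof.
move=> [w [hxw hyw]] hr hxz; move: hxw hyw hxz; rewrite -!ball_normE /= => hxw hyw hxz.
have -> : y - z = (y - w) + (w - x) + (x - z) by rewrite !addrA subrK subrK.
rewrite (le_lt_trans (ler_normD _ _)) // (le_lt_trans (lerD (ler_normD _ _) (lexx _))) //.
rewrite distrC in hxw.
have -> : 3 * rad y = rad y + rad y + rad y by lra.
rewrite ltrD // ?ltrD //; exact: lt_le_trans hr.
Qed.

Lemma max_rad (xs : seq V) : xs != [::] -> exists2 y, y \in xs & forall x, x \in xs -> rad x <= rad y.
Proof.
elim: xs => [//|a [|b s] IH] _.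
  by exists a; rewrite ?mem_head // => x; rewrite inE => /eqP ->.
have [y ys hy] := IH isT.
have [ay|ya] := leP (rad a) (rad y).
  exists y; first by rewrite inE ys orbT.
  by move=> x; rewrite inE => /predU1P [->|/hy].
exists a; first exact: mem_head.
move=> x; rewrite inE => /predU1P [->//|/hy hx]; exact: (le_trans hx (ltW ya)).
Qed.

Lemma vitali_fin (xs : seq V) : exists D : seq V, [/\ {subset D <= xs}, sep D &
  forall x z, x \in xs -> ball x (rad x) z -> exists2 y, y \in D & ball y (3 * rad y) z].
Proof.
move: {2}(size xs) (leqnn (size xs)) => n; elim: n xs => [|n IH] xs hs.
  by case: xs hs => // _; exists [::].
case: (eqVneq xs [::]) => [->|xs0]; first by exists [::].
have [y ys hy] := @max_rad xs xs0.
pose p := fun x : V => `[< ball x (rad x) `&` ball y (rad y) = set0 >].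
have [D [DS sD cD]] : exists D : seq V, [/\ {subset D <= seq.filter p xs}, sep D &
  forall x z, x \in seq.filter p xs -> ball x (rad x) z -> exists2 y, y \in D & ball y (3 * rad y) z].
  apply: IH; rewrite -ltnS; apply: leq_trans hs.
  rewrite size_filter -(count_predC p xs).
  have : (0 < count (predC p) xs)%N.
    rewrite -has_count; apply/hasP; exists y => //=; apply/negP => /asboolP h.
    have : (ball y (rad y) `&` ball y (rad y)) y by split; exact: ballxx.
    by rewrite h.
  rewrite -ltnS. lia.
exists (y :: D); split.
- move=> z; rewrite inE => /predU1P [->//|/DS]; rewrite mem_filter => /andP [].
  by [].
- split => // z /DS; rewrite mem_filter => /andP [/asboolP h _]; by rewrite setIC.
- move=> x z xx hz; case: (boolP (p x)) => px.
    have [|w wD hw] := cD x z _ hz; first by rewrite mem_filter px xx.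
    by exists w => //; rewrite inE wD orbT.
  exists y; first exact: mem_head.
  apply: (@ball3 x y z _ (hy _ xx) hz); apply/set0P/eqP => h; apply: (negP px); exact/asboolP.
Qed.

End Vit.
Arguments sep {R d}.

Section Meas.
Variables (R : realType) (d : nat).
Local Notation V := 'rV[R]_d.
Local Notation T := (borelRd R d).

Lemma open_meas (A : set V) : open A -> measurable (A : set T).
Proof. by move=> h; exact: sub_sigma_algebra. Qed.

Lemma sep_sum (rad : V -> R) (m : {measure set T -> \bar R}) (D : seq V) :
  sep rad D -> (\sum_(y <- D) m (ball y (rad y)) <= m setT)%E.
Proof.
have H : forall D, sep rad D -> \sum_(y <- D) m (ball y (rad y)) =
    m (\big[setU/set0]_(y <- D) ball y (rad y)).
  elim=> [|y D' IH] /=; first by rewrite !big_nil measure0.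
  move=> [hy hD]; rewrite !big_cons IH // measureU //.
  - apply: open_meas; exact: ball_open.
  - by apply: bigsetU_measurable => i _; apply: open_meas; exact: ball_open.
  - rewrite big_distrr /= big_seq big1 // => z zD; exact: hy.
move=> hD; rewrite H //; apply: le_measure; rewrite ?inE //.
by apply: bigsetU_measurable => i _; apply: open_meas; exact: ball_open.
Qed.

Lemma sum_E (rad : V -> R) (I : choiceType) (E : I -> {measure set T -> \bar R})
  (D : seq V) (idx : V -> I) : sep rad D ->
  (\sum_(y <- D) E (idx y) (ball y (rad y)) <= \esum_(i in [set: I]) E i [set: T])%E.
Proof.
move=> hD; pose F := undup (map idx D).
have uF : uniq F by exact: undup_uniq.
apply: (@le_trans _ _ (\sum_(y <- D) \sum_(i <- F) E i (ball y (rad y)))).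
  rewrite big_seq [X in (_ <= X)%E]big_seq; apply: lee_sum => y yD.
  have iF : idx y \in F by rewrite mem_undup; apply: map_f.
  rewrite (bigD1_seq (idx y)) //=; apply: leeDl; apply: sume_ge0 => i _.
  exact: measure_ge0.
rewrite exchange_big /=.
apply: (@le_trans _ _ (\sum_(i <- F) E i [set: T])).
  by apply: lee_sum => i _; exact: sep_sum.
rewrite fsbig_seq //; apply: esum_ge; exists [set` F] => //.
Qed.

End Meas.
Section Ratio.
Variables (R : realType) (d : nat).
Local Notation V := 'rV[R]_d.
Local Notation T := (borelRd R d).

Lemma eball_meas (x : V) r : measurable (eball x r : set T).
Proof. apply: open_meas; exact: eball_open. Qed.

Lemma ratio_lt (mu : probability T R) (x : V) (a r : R) : 0 < r < 1 ->
  (local_ratio mu x r < a%:E)%E -> ((r `^ a)%:E < mu (eball x r))%E.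
Proof.
move=> /andP [r0 r1]; rewrite /local_ratio.
have lr : ln r < 0 by apply: ln_lt0; rewrite r0 r1.
have m1 := probability_le1 mu (eball_meas x r).
have m0 : (0 <= mu (eball x r))%E by apply: measure_ge0.
move: m1 m0; case: (mu (eball x r)) => [m| |] //= m1 m0.
rewrite lee_fin in m0.
case: (eqVneq m 0) => [->|mn0].
  by rewrite lt0_mulNye // lte_fin invr_lt0.
rewrite -EFinM lte_fin ltr_ndivrMr // => h.
have mp : 0 < m by rewrite lt_neqAle eq_sym mn0.
rewrite lte_fin /powR (negbTE (lt0r_neq0 r0)) -(lnK mp) ltr_expR.
exact: h.
Qed.

End Ratio.
Section Misc.
Variables (R : realType) (d : nat).
Local Notation V := 'rV[R]_d.

Lemma liminf_small (f : R -> \bar R) (t a : R) :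
  (limf_einf f (0:R)^'+ <= t%:E)%E -> t < a ->
  forall rho, 0 < rho -> exists r, 0 < r < rho /\ (f r < a%:E)%E.
Proof.
rewrite limf_einfE => hle ta rho rho0.
have hV : (0:R)^'+ [set r | 0 < r < rho].
  near=> r; apply/andP; split; near: r; [exact: nbhs_right_gt | exact: nbhs_right_lt].
have : (ereal_inf (f @` [set r : R | (0 < r < rho)%R]) < a%:E)%E.
  apply: le_lt_trans _ (_ : t%:E < a%:E)%E; last by rewrite lte_fin.
  apply: le_trans hle; apply: ereal_sup_ubound; by exists [set r | 0 < r < rho].
move/ereal_inf_lt => [_ [r hr <-] h]; by exists r.
Unshelve. all: by end_near.
Qed.

Definition cst6 := 6 * Num.sqrt (d%:R : R).

Lemma cst6_ge0 : 0 <= cst6.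
Proof. by rewrite /cst6 mulr_ge0 // sqrtr_ge0. Qed.

Lemma ediam_ball (y : V) r : 0 < r ->
  (0 <= ediam (ball y (3 * r)))%E /\ (ediam (ball y (3 * r)) <= (cst6 * r)%:E)%E.
Proof.
move=> r0; split.
  apply: ereal_sup_ubound; exists y; first exact: ballxx (mulr_gt0 _ r0).
  by exists y; [exact: ballxx (mulr_gt0 _ r0) | rewrite subrr (@enorm0 R d)].
apply: ge_ereal_sup => _ [a ha [b hb <-]]; rewrite lee_fin.
move: ha hb; rewrite -!ball_normE /= => ha hb.
apply: (le_trans (@enorm_le_norm R d _)).
rewrite (_ : cst6 * r = Num.sqrt d%:R * (6 * r)); last by rewrite /cst6; ring.
apply: ler_wpM2l; first exact: sqrtr_ge0.
have -> : a - b = (a - y) + (y - b) by rewrite addrA subrK.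
rewrite distrC in ha.
have := ler_normD (a - y) (y - b); lra.
Qed.

Lemma hterm_ball (y : V) r s : 0 < r -> 0 <= s ->
  (hterm s (ball y (3 * r)) <= ((cst6 * r) `^ s)%:E)%E.
Proof.
move=> r0 s0; rewrite /hterm; case: pselect => h; first by rewrite lee_fin powR_ge0.
have [h1 h2] := ediam_ball y r r0.
rewrite lee_fin; apply: ge0_ler_powR => //.
- by rewrite nnegrE; move: h1; case: (ediam _) => //= x; rewrite lee_fin.
- by rewrite nnegrE mulr_ge0 // ?cst6_ge0 ?ltW.
- move: h1 h2; case: (ediam _) => //= [x _|]; rewrite ?lee_fin //.
Qed.

Lemma hterm_ge0 s (U : set V) : (0 <= hterm s U)%E.
Proof. by rewrite /hterm; case: pselect => h //; rewrite lee_fin powR_ge0. Qed.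

Lemma hterm0 s : hterm s (set0 : set V) = 0%E.
Proof. by rewrite /hterm; case: pselect. Qed.

End Misc.
Lemma series_fin (R : realType) (u : nat -> \bar R) N :
  (forall n, (N <= n)%N -> u n = 0%E) ->
  (\sum_(0 <= n <oo) u n)%E = (\sum_(0 <= n < N) u n)%E.
Proof.
move=> h; apply: lim_near_cst => //; near=> M.
have NM : (N <= M)%N by near: M; exact: nbhs_infty_ge.
rewrite (big_cat_nat (leq0n N) NM) /=.
rewrite [X in (_ + X)%E = _](_ : _ = 0%E) ?adde0 //.
by rewrite big_nat_cond big1 // => i /andP [/andP [Ni _] _]; exact: h.
Unshelve. all: by end_near.
Qed.

Lemma main_H0 (R : realType) (d : nat) (K : set 'rV[R]_d)
    (Delta : set (probability (borelRd R d) R)) (t : R) (x0 : 'rV[R]_d) :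
  compact K -> K x0 -> 0 <= t ->
  uniform_densities K Delta ->
  (forall x, K x -> exists2 mu, Delta mu & (lower_local_dim mu x <= t%:E)%E) ->
  forall s', t < s' -> hausdorff_measure s' K = 0%E.
Proof.
move=> Kc Kx0 t0 Hud Hloc s' ts'.
pose e3 := (s' - t) / 3.
have e30 : 0 < e3 by rewrite /e3; lra.
have [I [E [hsum [eta eta0 hE]]]] := Hud e3 e30.
pose a := t + e3.
pose s := e3 + a.
have s0 : 0 <= s by rewrite /s /a; lra.
have s'0 : 0 <= s' by lra.
have s's : s' = e3 + s by rewrite /s /a /e3; lra.
have esum0 : (0 <= \esum_(i in [set: I]) E i [set: borelRd R d])%E.
  by apply: esum_ge0 => i _; exact: measure_ge0.
pose M := fine (\esum_(i in [set: I]) E i [set: borelRd R d]).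
have hM : \esum_(i in [set: I]) E i [set: borelRd R d] = M%:E.
  by rewrite fineK // ge0_fin_numE.
have M0 : 0 <= M by rewrite -lee_fin -hM.
pose c := cst6 R d.
have c0 : 0 <= c := cst6_ge0 R d.
have claim : forall delta, 0 < delta -> hausdorff_delta s' delta K = 0%E.
  move=> delta delta0; apply/eqP; rewrite eq_le; apply/andP; split; last first.
    apply: le_ereal_inf_tmp => _ [U _ <-]; apply: nneseries_ge0 => n _ _.
    exact: hterm_ge0.
  apply/lee_addgt0Pr => eps eps0; rewrite add0e.
  pose Kc0 := c `^ s' * M + 1.
  have Kc00 : 0 < Kc0 by rewrite /Kc0; have := powR_ge0 c s'; nra.
  pose rho := Order.min (Order.min (delta / (c + 1)) ((eps / Kc0) `^ (e3^-1))) (Order.min eta 1).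
  have rho0 : 0 < rho.
    rewrite /rho !lt_min eta0 ltr01 powR_gt0 ?divr_gt0 //; lra.
  have rho_eta : rho <= eta by rewrite /rho !ge_min lexx !orbT.
  have rho_1 : rho <= 1 by rewrite /rho !ge_min lexx !orbT.
  have rho_d : rho <= delta / (c + 1) by rewrite /rho !ge_min lexx.
  have rho_e : rho <= (eps / Kc0) `^ (e3^-1) by rewrite /rho !ge_min lexx !orbT.
  have hK : forall x, K x -> exists p : R * I, 0 < p.1 < rho /\
      ((p.1 `^ s)%:E <= E p.2 (ball x p.1))%E.
    move=> x Kx.
    have [mu Dmu hle] := Hloc x Kx.
    rewrite /lower_local_dim in hle.
    have [|r [/andP [r0 rr] hr]] := @liminf_small R _ _ a hle _ rho rho0.
      by rewrite /a; lra.
    have r1 : r < 1 by lra.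
    have reta : r < eta by lra.
    have r01 : 0 < r < 1 by rewrite r0 r1.
    have r0eta : 0 < r < eta by rewrite r0 reta.
    have hmu := @ratio_lt R d mu x a r r01 hr.
    have [i hi] := hE mu Dmu r r0eta x Kx.
    exists (r, i); split => /=; first by rewrite r0 rr.
    apply: (@le_trans _ _ (E i (eball x r))).
      apply: le_trans hi; rewrite /s powRD; last by rewrite (lt0r_neq0 r0) implybT.
      rewrite EFinM; apply: lee_wpmul2l; first by rewrite lee_fin powR_ge0.
      exact: ltW.
    apply: le_measure; rewrite ?inE.
    - exact: eball_meas.
    - apply: open_meas; exact: ball_open.
    - exact: eball_sub_ball.
  have hsel : forall x, exists p : R * I, 0 < p.1 < rho /\
      (K x -> ((p.1 `^ s)%:E <= E p.2 (ball x p.1))%E).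
    move=> x; case: (pselect (K x)) => Kx.
      by have [p [h1 h2]] := hK x Kx; exists p.
    by have [p [h1 h2]] := hK x0 Kx0; exists p; split => // /Kx.
  have [g hg] := choice hsel.
  pose rad := fun x => (g x).1.
  pose idx := fun x => (g x).2.
  have rad0 : forall x, 0 < rad x by move=> x; have [/andP [] ] := hg x.
  have radr : forall x, rad x < rho by move=> x; have [/andP [] ] := hg x.
  have : cover_compact K by rewrite -compact_cover.
  move/(_ _ K (fun x => ball x (rad x))) => [x _|x Kx|D' D'K Kcov].
  - exact: ball_open.
  - by exists x => //; exact: ballxx.
  have [D [DS sD cD]] := @vitali_fin R d rad rad0 (finmap.enum_fset D').
  pose U := fun n => if (n < size D)%N then ball (nth 0 D n) (3 * rad (nth 0 D n))
                     else set0.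
  have DK : forall y, y \in D -> K y.
    by move=> y /DS yD'; have := D'K y yD'; rewrite inE.
  apply: (@le_trans _ _ (\sum_(0 <= n <oo) hterm s' (U n))%E).
    apply: ereal_inf_lbound; exists U => //; split.
    - move=> z Kz; have [x xD' hx] := Kcov z Kz.
      have [y yD hy] := cD x z xD' hx.
      exists (index y D) => //; rewrite /U index_mem yD nth_index //.
    - move=> n; rewrite /U; case: ifP => hn.
        set y := nth 0 D n.
        have [_ h2] := @ediam_ball R d y (rad y) (rad0 y).
        apply: (le_trans h2); rewrite lee_fin.
        have hr : rad y * (c + 1) <= delta.
          rewrite -ler_pdivlMr; last lra.
          exact: le_trans (ltW (radr y)) rho_d.
        move: hr c0 (rad0 y); rewrite /c; nra.
      by apply: ge_ereal_sup => _ [? [] ].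
  rewrite (@series_fin R _ (size D)); last first.
    by move=> n hn; rewrite /U ltnNge hn /= hterm0.
  have -> : (\sum_(0 <= n < size D) hterm s' (U n))%E =
      (\sum_(y <- D) hterm s' (ball y (3 * rad y)))%E.
    rewrite [RHS](big_nth 0); apply: eq_big_nat => n /andP [_ hn].
    by rewrite /U hn.
  pose k := c `^ s' * rho `^ e3.
  have k0 : 0 <= k by rewrite /k mulr_ge0 // powR_ge0.
  apply: (@le_trans _ _ (\sum_(y <- D) (k%:E * E (idx y) (ball y (rad y))))%E).
    rewrite big_seq [X in (_ <= X)%E]big_seq; apply: lee_sum => y yD.
    apply: (le_trans (@hterm_ball R d y (rad y) s' (rad0 y) s'0)).
    have [_ hy] := hg y; have := hy (DK y yD) => {}hy.
    apply: le_trans (lee_wpmul2l _ hy); last by rewrite lee_fin.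
    rewrite -EFinM lee_fin /k powRM ?(ltW (rad0 y)) // -mulrA.
    apply: ler_wpM2l; first exact: powR_ge0.
    rewrite s's powRD; last by rewrite (lt0r_neq0 (rad0 y)) implybT.
    apply: ler_wpM2r; first exact: powR_ge0.
    apply: ge0_ler_powR; rewrite ?nnegrE; [exact: ltW | exact: ltW (rad0 y) | exact: ltW | exact: ltW (radr y)].
  rewrite -ge0_sume_distrr; last by move=> y _; exact: measure_ge0.
  apply: le_trans (lee_wpmul2l _ (@sum_E R d rad I E D idx sD)) _; first by rewrite lee_fin.
  rewrite hM -EFinM lee_fin.
  have hre : rho `^ e3 <= eps / Kc0.
    apply: (le_trans (ge0_ler_powR (ltW e30) _ _ rho_e)); rewrite ?nnegrE ?powR_ge0 ?(ltW rho0) //.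
    rewrite -powRrM mulVf ?powRr1 //; last by apply: lt0r_neq0.
    by rewrite divr_ge0 // ltW.
  move: hre; rewrite ler_pdivlMr // /k /Kc0 => hre.
  have := powR_ge0 c s'; have := powR_ge0 rho e3; nra.
apply/eqP; rewrite eq_le; apply/andP; split.
  by apply: ge_ereal_sup => _ [delta delta0 <-]; rewrite claim.
apply: ereal_sup_ubound; exists 1; [exact: ltr01 | exact: claim].
Qed.
Theorem propositionp (R : realType) (d : nat) (K : set 'rV[R]_d)
    (Delta : set (probability (borelRd R d) R)) (t : R) :
  compact K -> K !=set0 ->
  (forall mu, Delta mu -> supported_in mu K) ->
  uniform_densities K Delta ->
  (forall x, K x -> exists2 mu, Delta mu & (lower_local_dim mu x <= t%:E)%E) ->
  (hausdorff_dim K <= t%:E)%E.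
Proof.
move=> Kc [x0 Kx0] _ Hud Hloc.
have t0 : 0 <= t.
  rewrite leNgt; apply/negP => tn.
  have [mu Dmu hle] := Hloc x0 Kx0.
  rewrite /lower_local_dim in hle.
  have [|r [/andP [r0 r1] hr]] := @liminf_small R _ _ (t / 2) hle _ 1 ltr01; first lra.
  have hmu := @ratio_lt R d mu x0 (t / 2) r (_ : 0 < r < 1) hr.
  have hle1 := probability_le1 mu (@eball_meas R d x0 r).
  have : 1 <= r `^ (t / 2).
    rewrite /powR (negbTE (lt0r_neq0 r0)) -[leLHS]expR0 ler_expR.
    have : ln r < 0 by apply: ln_lt0; rewrite r0 r1.
    move=> hl; apply: mulr_le0; lra.
  rewrite -lee_fin => h1.
  have := lt_le_trans (le_lt_trans h1 (hmu _)) hle1.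
  by rewrite r0 r1 ltxx => /(_ isT).
have H0 : forall s', t < s' -> hausdorff_measure s' K = 0%E.
  exact: (@main_H0 R d K Delta t x0 Kc Kx0 t0 Hud Hloc).
apply/lee_addgt0Pr => e e0; rewrite -EFinD.
apply: ereal_inf_lbound; exists (t + e) => //; split; first lra.
apply: H0; lra.
Qed.
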